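(* Assume the standing setting in the context and, in addition, that $\Omega$ is a strictly convex bounded domain and $\Lambda$ is a uniformly convex bounded domain with $C^{1,1}$ boundary. Then $$\nabla\tilde\Psi_m(A_2)\subset\partial\big(P_\Lambda(\Omega)\cap\partial\Lambda\big)\setminus\partial\big(\partial(\Omega\cap\Lambda)\cap\partial\Lambda\big).$$
   Context: Let $f,g\in L^1(\mathbb{R}^n)$ be nonnegative with compact support, $\Omega:=\{f>0\}$, $\Lambda:=\{g>0\}$. Standing assumption: $\Omega,\Lambda$ bounded, open, strictly convex, and $f,g$ bounded away from zero and infinity on $\Omega,\Lambda$. Fix $m$ with $\|\min\{f,g\}\|_{L^1}\le m\le\min\{\|f\|_{L^1},\|g\|_{L^1}\}$. The unique minimizer of $\int|x-y|^2d\gamma$ among nonnegative Borel measures of mass $m$ on $\mathbb{R}^n\times\mathbb{R}^n$ with $\gamma(A\times\mathbb{R}^n)\le\int_Af$, $\gamma(\mathbb{R}^n\times A)\le\int_Ag$ is $\gamma_m=(\mathrm{Id}\times\nabla\Psi_m)_\#f_m=(\nabla\Psi_m^*\times\mathrm{Id})_\#g_m$, $\Psi_m$ convex, $0\le f_m\le f$, $0\le g_m\le g$, $(\nabla\Psi_m)_\#f_m=g_m$, $\Psi^*$ the Legendre transform. With $F_m,G_m$ the density points of $\{f_m>0\},\{g_m>0\}$, $D_{\nabla\Psi_m},D_{\nabla\Psi_m^*}$ continuity points, $\Gamma_m:=(\mathrm{Id}\times\nabla\Psi_m)(F_m\cap D_{\nabla\Psi_m})\cap(\nabla\Psi_m^*\times\mathrm{Id})(G_m\cap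 D_{\nabla\Psi_m^*})$, set $U_m:=(\Omega\cap\Lambda)\cup\bigcup_{(\bar x,\bar y)\in\Gamma_m}B_{|\bar x-\bar y|}(\bar y)$, $V_m:=(\Omega\cap\Lambda)\cup\bigcup_{(\bar x,\bar y)\in\Gamma_m}B_{|\bar x-\bar y|}(\bar x)$. $\tilde\Psi_m$ is the convex $C^1(\mathbb{R}^n)$ extension of $\Psi_m$ (Figalli) with $\tilde\Psi_m=\Psi_m$ on $U_m\cap\Omega$, $\nabla\tilde\Psi_m(x)=x$ on $\Lambda\setminus\overline{V_m}$, $\nabla\tilde\Psi_m(\mathbb{R}^n)=\overline\Lambda$, $\nabla\tilde\Psi_m:\overline{U_m\cap\Omega}\to\overline{V_m\cap\Lambda}$ a homeomorphism with inverse $\nabla\tilde\Psi_m^*$. Definitions: $\partial_{nt}\Lambda:=\{y\in\partial\Lambda\cap\overline{\Lambda\cap\partial V_m}:\langle\nabla\tilde\Psi_m^*(y)-y,z-y\rangle\le0\ \forall z\in\Lambda\}$; for $x\in\partial(\Omega\cap U_m)$ with $\nabla\tilde\Psi_m(x)\ne x$, $L(x):=\{\nabla\tilde\Psi_m(x)+t\frac{x-\nabla\tilde\Psi_m(x)}{|x-\nabla\tilde\Psi_m(x)|}:t\ge0\}$; $K:=\{x\in\partial(\Omega\cap U_m):\nabla\tilde\Psi_m(x)\ne x,\ L(x)\cap\overline{\Omega\cap U_m}\subset\partial(\overline{\Omega\cap U_m})\}$; $S_1:=(\nabla\tilde\Psi_m)^{-1}(\partial_{nt}\Lambda)\cap K$;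 $A_2:=S_1\setminus\partial U_m$. $P_\Lambda$ is the nearest-point projection onto $\overline\Lambda$; for $E\subset\partial\Lambda$, $\partial E$ denotes the boundary of $E$ relative to $\partial\Lambda$. *)

(* Defs.v *)
From HB Require Import structures.
From mathcomp Require Import all_boot all_order all_algebra.
From mathcomp Require Import all_classical all_reals all_analysis.
Set Implicit Arguments. Unset Strict Implicit. Unset Printing Implicit Defensive.
Import Order.TTheory GRing.Theory Num.Theory.
Import numFieldNormedType.Exports.
Local Open Scope classical_set_scope.
Local Open Scope ring_scope.

Section Rn.
Variables (R : realType) (n : nat).
Local Notation E := 'rV[R]_n.

(* Borel sigma-algebra on R^n (generated by the open sets of the usual
   (product = Euclidean) topology of 'rV[R]_n). *)
HB.instance Definition _ := @isMeasurable.Build (sigma_display (@open E)) E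
  <<s @open E >> (@sigma_algebra0 _ setT (@open E)) (@sigma_algebraC _ (@open E))
  (@sigma_algebra_bigcup _ setT (@open E)).

Definition dotv (x y : E) : R := \sum_(i < n) x ord0 i * y ord0 i.
Definition enorm (x : E) : R := Num.sqrt (dotv x x).
Definition eball (c : E) (r : R) : set E := [set x | enorm (x - c) < r].

Definition box (a b : E) : set E := [set x | forall i, a ord0 i <= x ord0 i <= b ord0 i].

Definition is_lebesgue (leb : {measure set E -> \bar R}) : Prop :=
  forall a b : E, (forall i, a ord0 i <= b ord0 i) ->
    leb (box a b) = (\prod_(i < n) (b ord0 i - a ord0 i))%:E.

Definition bdry (A : set E) : set E := closure A `\` interior A.

(* boundary of A relative to S (A is a subset of S) *)
Definition relbdry (S A : set E) : set E :=
  [set x | S x /\ closure A x /\ ~ (A x /\ exists r, 0 < r /\ eball x r `&` S `<=` A)].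

Definition ebounded (A : set E) : Prop := exists M : R, forall x, A x -> enorm x <= M.

Definition strictly_convex_set (A : set E) : Prop :=
  forall x y, closure A x -> closure A y -> x != y ->
    forall t : R, 0 < t < 1 -> A (t *: x + (1 - t) *: y).

Definition uniformly_convex_set (A : set E) : Prop :=
  exists c : R, 0 < c /\ forall x y, closure A x -> closure A y ->
    eball ((2 : R)^-1 *: (x + y)) (c * enorm (x - y) ^+ 2) `<=` A.

Definition has_grad (phi : E -> R) (x p : E) : Prop :=
  forall eps : R, 0 < eps -> exists delta : R, 0 < delta /\
    forall h : E, enorm h < delta ->
      `|phi (x + h) - phi x - dotv p h| <= eps * enorm h.

Definition rgrad (phi : E -> R) (x : E) : E := xget 0 [set p | has_grad phi x p].

(* bounded domain with C^{1,1} boundary (global defining function) *)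
Definition C11_boundary (A : set E) : Prop :=
  exists (rho : E -> R) (G : E -> E),
    (forall x, has_grad rho x (G x)) /\
    (exists L : R, forall x y, enorm (G x - G y) <= L * enorm (x - y)) /\
    A = [set x | rho x < 0] /\
    (forall x, bdry A x -> G x != 0).

Definition is_domain (A : set E) : Prop := open A /\ connected A /\ A !=set0.

Definition rconvex (phi : E -> R) : Prop :=
  forall x y (t : R), 0 <= t <= 1 -> phi (t *: x + (1 - t) *: y) <= t * phi x + (1 - t) * phi y.

Definition econvex (phi : E -> \bar R) : Prop :=
  (forall x, phi x != -oo%E) /\
  forall (x y : E) (t : R), 0 <= t <= 1 ->
    (phi (t *: x + (1 - t) *: y)%R <= t%:E * phi x + (1 - t)%:E * phi y)%E.

Definition legendre (phi : E -> \bar R) (y : E) : \bar R :=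
  ereal_sup [set ((dotv x y)%:E - phi x)%E | x in [set: E]].

Definition has_egrad (phi : E -> \bar R) (x p : E) : Prop :=
  (exists r : R, 0 < r /\ forall z, enorm (z - x) < r -> phi z \is a fin_num) /\
  has_grad (fun z => fine (phi z)) x p.
Definition edifferentiable (phi : E -> \bar R) (x : E) : Prop := exists p, has_egrad phi x p.
Definition egrad (phi : E -> \bar R) (x : E) : E := xget 0 [set p | has_egrad phi x p].

Definition grad_cont_pts (phi : E -> \bar R) : set E :=
  [set x | edifferentiable phi x /\
    forall eps : R, 0 < eps -> exists delta : R, 0 < delta /\
      forall z, edifferentiable phi z -> enorm (z - x) < delta ->
        enorm (egrad phi z - egrad phi x) < eps].

Definition density_pts (leb : {measure set E -> \bar R}) (S : set E) : set E :=
  [set x | (fun r : R => fine (leb (S `&` eball x r)) / fine (leb (eball x r)))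
             @ (0 : R)^'+ --> (1 : R)].

Definition pos_set (h : E -> R) : set E := [set x | 0 < h x].

Definition admissible (leb : {measure set E -> \bar R}) (f g : E -> R) (m : R)
  (gam : {measure set (E * E)%type -> \bar R}) : Prop :=
  gam setT = m%:E /\
  (forall A : set E, measurable A -> (gam (A `*` setT) <= \int[leb]_(x in A) (f x)%:E)%E) /\
  (forall A : set E, measurable A -> (gam (setT `*` A) <= \int[leb]_(x in A) (g x)%:E)%E).

Definition cost (gam : {measure set (E * E)%type -> \bar R}) : \bar R :=
  (\int[gam]_z (enorm (z.1 - z.2) ^+ 2)%:E)%E.

Definition Gamma_set (leb : {measure set E -> \bar R}) (Psi : E -> \bar R) (fm gm : E -> R)
  : set (E * E) :=
  [set p | (exists x, density_pts leb (pos_set fm) x /\ grad_cont_pts Psi x /\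
                      p = (x, egrad Psi x)) /\
           (exists y, density_pts leb (pos_set gm) y /\ grad_cont_pts (legendre Psi) y /\
                      p = (egrad (legendre Psi) y, y))].

Definition U_set (Om La : set E) (Gam : set (E * E)) : set E :=
  (Om `&` La) `|` \bigcup_(p in Gam) eball p.2 (enorm (p.1 - p.2)).
Definition V_set (Om La : set E) (Gam : set (E * E)) : set E :=
  (Om `&` La) `|` \bigcup_(p in Gam) eball p.1 (enorm (p.1 - p.2)).

Definition inv_on (T : E -> E) (D : set E) (y : E) : E := xget 0 [set x | D x /\ T x = y].

Definition proj_on (La : set E) (x : E) : E :=
  xget 0 [set y | closure La y /\ forall z, closure La z -> enorm (x - y) <= enorm (x - z)].

(* d_nt Lambda, with Tinv standing for grad tilde Psi^* *)
Definition bd_nt (La V : set E) (Tinv : E -> E) : set E :=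
  [set y | bdry La y /\ closure (La `&` bdry V) y /\
           forall z, La z -> dotv (Tinv y - y) (z - y) <= 0].

Definition ray_L (T : E -> E) (x : E) : set E :=
  [set T x + t *: ((enorm (x - T x))^-1 *: (x - T x)) | t in [set t : R | 0 <= t]].

Definition K_set (OU : set E) (T : E -> E) : set E :=
  [set x | bdry OU x /\ T x != x /\ ray_L T x `&` closure OU `<=` bdry (closure OU)].

End Rn.

(* Main.v *)
Require Import Defs.
From HB Require Import structures.
From mathcomp Require Import all_boot all_order all_algebra.
From mathcomp Require Import all_classical all_reals all_analysis.
From mathcomp Require Import ring lra.
Import Order.TTheory GRing.Theory Num.Theory.
Import numFieldNormedType.Exports.
Local Open Scope classical_set_scope.
Local Open Scope ring_scope.

Set Implicit Arguments.
Section Aux.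
Variables (R : realType) (n : nat).
Local Notation E := 'rV[R]_n.
Implicit Types (u v w : E).

Lemma dotvC u v : dotv u v = dotv v u.
Proof. by apply: eq_bigr => i _; rewrite mulrC. Qed.

Lemma dotvDl u v w : dotv (u + v) w = dotv u w + dotv v w.
Proof. by rewrite /dotv -big_split; apply: eq_bigr => i _; rewrite !mxE mulrDl. Qed.

Lemma dotvZl (a : R) u v : dotv (a *: u) v = a * dotv u v.
Proof. by rewrite /dotv mulr_sumr; apply: eq_bigr => i _; rewrite !mxE mulrA. Qed.

Lemma dotvNl u v : dotv (- u) v = - dotv u v.
Proof. by rewrite -scaleN1r dotvZl mulN1r. Qed.

Lemma dotvBl u v w : dotv (u - v) w = dotv u w - dotv v w.
Proof. by rewrite dotvDl dotvNl. Qed.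

Lemma dotvDr u v w : dotv u (v + w) = dotv u v + dotv u w.
Proof. by rewrite dotvC dotvDl !(dotvC u). Qed.
Lemma dotvZr (a : R) u v : dotv u (a *: v) = a * dotv u v.
Proof. by rewrite dotvC dotvZl dotvC. Qed.
Lemma dotvNr u v : dotv u (- v) = - dotv u v.
Proof. by rewrite dotvC dotvNl dotvC. Qed.
Lemma dotvBr u v w : dotv u (v - w) = dotv u v - dotv u w.
Proof. by rewrite dotvDr dotvNr. Qed.

Lemma dotv_ge0 u : 0 <= dotv u u.
Proof. by apply: sumr_ge0 => i _; rewrite -expr2 sqr_ge0. Qed.

Lemma dotv_eq0 u : dotv u u = 0 -> u = 0.
Proof.
move=> /eqP; rewrite psumr_eq0; last by move=> i _; rewrite -expr2 sqr_ge0.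
move=> /allP H; apply/rowP => i; rewrite mxE.
have := H i (mem_index_enum _); rewrite -expr2 sqrf_eq0 => /eqP.
by rewrite (ord1 ord0).
Qed.

Lemma normE u : `|u| = \big[Num.max/0%R]_ij `|u ij.1 ij.2|.
Proof. exact: mx_normrE. Qed.

Lemma coord_le_norm u i : `|u ord0 i| <= `|u|.
Proof.
rewrite normE; apply/bigmax_geP; right; exists (ord0, i) => //.
Qed.

Lemma norm_le u (c : R) : 0 <= c -> (forall i, `|u ord0 i| <= c) -> `|u| <= c.
Proof.
move=> c0 H; rewrite normE; apply: bigmax_le => // -[i j] _ /=.
by rewrite (ord1 i).
Qed.

Lemma coord_sqr_le u i : u ord0 i ^+ 2 <= dotv u u.
Proof.
rewrite /dotv (bigD1 i) //= -expr2 lerDl.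
by apply: sumr_ge0 => j _; rewrite -expr2 sqr_ge0.
Qed.

Lemma enorm_sqr u : enorm u ^+ 2 = dotv u u.
Proof. by rewrite /enorm sqr_sqrtr // dotv_ge0. Qed.

Lemma enorm_ge0 u : 0 <= enorm u.
Proof. exact: sqrtr_ge0. Qed.

Lemma enorm_le u v : (enorm u <= enorm v) = (dotv u u <= dotv v v).
Proof. by rewrite /enorm ler_sqrt // dotv_ge0. Qed.

Lemma enorm_eq0 u : enorm u = 0 -> u = 0.
Proof.
move=> H; apply: dotv_eq0; rewrite -enorm_sqr H; by rewrite expr0n.
Qed.

Lemma norm_le_enorm u : `|u| <= enorm u.
Proof.
apply: norm_le; first exact: enorm_ge0.
move=> i; rewrite /enorm -sqrtr_sqr ler_sqrt ?dotv_ge0 //; exact: coord_sqr_le.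
Qed.

Lemma norm_sqr_le u : `|u| ^+ 2 <= dotv u u.
Proof.
rewrite -enorm_sqr; apply: lerXn2r; rewrite ?nnegrE ?enorm_ge0 //.
exact: norm_le_enorm.
Qed.

Lemma dotv_le_norm u : dotv u u <= n%:R * `|u| ^+ 2.
Proof.
rewrite /dotv; have -> : n%:R * `|u| ^+ 2 = \sum_(i < n) `|u| ^+ 2.
  by rewrite sumr_const card_ord mulr_natl.
apply: ler_sum => i _; rewrite -expr2 -real_normK ?num_real //.
apply: lerXn2r; rewrite ?nnegrE //; exact: coord_le_norm.
Qed.

Lemma abs_dotv_le u v : `|dotv u v| <= n%:R * (`|u| * `|v|).
Proof.
rewrite /dotv; have -> : n%:R * (`|u| * `|v|) = \sum_(i < n) (`|u| * `|v|).
  by rewrite sumr_const card_ord mulr_natl.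
apply: le_trans (ler_norm_sum _ _ _) _.
apply: ler_sum => i _; rewrite normrM; apply: ler_pM => //; exact: coord_le_norm.
Qed.

Lemma enorm_le_norm u : enorm u <= n%:R * `|u|.
Proof.
rewrite /enorm -(@ger0_norm _ (n%:R * `|u|)) ?mulr_ge0 // -sqrtr_sqr.
rewrite ler_sqrt ?sqr_ge0 //; apply: le_trans (dotv_le_norm u) _.
rewrite exprMn; apply: ler_wpM2r; first by rewrite sqr_ge0.
case: n => [|k]; first by rewrite expr0n.
by rewrite expr2 ler_peMl // ler1n.
Qed.

Lemma enormZ (a : R) u : enorm (a *: u) = `|a| * enorm u.
Proof.
by rewrite /enorm dotvZl dotvZr mulrA -expr2 sqrtrM ?sqr_ge0 // sqrtr_sqr.
Qed.

Lemma nbhs_ballN (x : E) (N : set E) : nbhs x N ->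
  exists e : R, 0 < e /\ forall z, `|x - z| < e -> N z.
Proof. by move=> /nbhs_normP [e e0 H]; exists e; split => // z Hz; apply: H. Qed.

Lemma closure_ballN (A : set E) x e : closure A x -> 0 < e ->
  exists z, A z /\ `|x - z| < e.
Proof.
move=> Hc e0; have := Hc (ball x e) (nbhsx_ballx _ _ e0).
by move=> [z [Az]]; rewrite -ball_normE /= => H; exists z.
Qed.

Lemma coord_cont i : continuous (fun z : E => z ord0 i).
Proof. exact: coord_continuous. Qed.

Lemma sum_cont (F : 'I_n -> E -> R) : (forall i, continuous (F i)) ->
  continuous (fun z => \sum_(i < n) F i z).
Proof.
move=> HF x; rewrite /index_enum /=.
elim: (Finite.enum _) => [|a s IH].
  have -> : (fun z : E => \sum_(i <- [::]) F i z) = (fun=> 0).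
    by apply: funext => z; rewrite big_nil.
  exact: (@cst_continuous _ _ (0:R) x).
have -> : (fun z : E => \sum_(i <- a :: s) F i z) =
   (fun z => F a z + \sum_(i <- s) F i z).
  by apply: funext => z; rewrite big_cons.
apply: continuousD => //; exact: HF.
Qed.

Lemma dist_cont w : continuous (fun z : E => dotv (w - z) (w - z)).
Proof.
apply: sum_cont => i x.
have Hi : {for x, continuous (fun z : E => (w - z) ord0 i)}.
  have -> : (fun z : E => (w - z) ord0 i) = (fun z : E => w ord0 i - z ord0 i).
    by apply: funext => z; rewrite !mxE.
  apply: continuousB; first exact: (@cst_continuous _ _ (w ord0 i) x).
  exact: coord_cont.
exact: (continuousM Hi Hi).
Qed.

Lemma proj_spec (La : set E) : La !=set0 -> ebounded La -> forall w,
  closure La (proj_on La w) /\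
  forall z, closure La z -> enorm (w - proj_on La w) <= enorm (w - z).
Proof.
move=> [a La_a] [M HM] w; rewrite /proj_on; apply: (xgetPex 0 (P := [set y | closure La y /\ forall z, closure La z -> enorm (w - y) <= enorm (w - z)])).
have Hcpt : compact (closure La).
  apply: bounded_closed_compact; last exact: closed_closure.
  rewrite /= /bounded_near; apply: filterS (nbhs_pinfty_ge (num_real (M + 1))).
  move=> r Mr z Hz /=.
  have [v [Lv Hv]] := @closure_ballN La z 1 Hz ltr01.
  apply: le_trans _ Mr.
  have -> : z = (z - v) + v by rewrite subrK.
  apply: le_trans (ler_normD _ _) _; rewrite addrC; apply: lerD.
    by apply: le_trans (norm_le_enorm v) (HM v Lv).
  exact: ltW.
have [p Hp Hmin] := EVT_min_rV (f := fun z => dotv (w - z) (w - z))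
  (ex_intro _ a (subset_closure La_a)) Hcpt (continuous_subspaceT (@dist_cont w)).
exists p; rewrite inE in Hp; split => // z Hz.
by rewrite enorm_le; apply: Hmin; rewrite inE.
Qed.

Lemma dotv0r u : dotv u 0 = 0.
Proof. by rewrite /dotv big1 // => i _; rewrite mxE mulr0. Qed.

Lemma dotv_expand (A B : E) (t : R) :
  dotv (A - t *: B) (A - t *: B) = dotv A A - 2 * t * dotv A B + t ^+ 2 * dotv B B.
Proof.
rewrite dotvBl !dotvBr !dotvZl !dotvZr (dotvC B A); ring.
Qed.

Lemma proj_VI (La : set E) : strictly_convex_set La -> forall w p,
  closure La p -> (forall z, closure La z -> enorm (w - p) <= enorm (w - z)) ->
  forall z, closure La z -> dotv (w - p) (z - p) <= 0.
Proof.
move=> Hsc w p Hp Hmin z Hz.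
have [->|zp] := eqVneq z p; first by rewrite subrr dotv0r.
set a := dotv (w - p) (z - p); set b := dotv (z - p) (z - p).
rewrite leNgt; apply/negP => a0.
have b0 : 0 <= b := dotv_ge0 _.
have ab0 : 0 < 2 * (a + b) by lra.
set t := a / (2 * (a + b)).
have t0 : 0 < t by apply: divr_gt0.
have tab : t * (2 * (a + b)) = a by rewrite /t mulfVK // gt_eqF.
have t1 : t < 1 by nra.
have Hzt := Hsc z p Hz Hp zp t (introT andP (conj t0 t1)).
have := Hmin _ (subset_closure Hzt); rewrite enorm_le.
have -> : w - (t *: z + (1 - t) *: p) = (w - p) - t *: (z - p).
  by apply/rowP => i; rewrite !mxE; ring.
rewrite dotv_expand -/a -/b.
move=> H; nra.
Qed.

Lemma VI_closure (La : set E) : strictly_convex_set La -> forall x y,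
  closure La y -> (forall z, La z -> dotv (x - y) (z - y) <= 0) ->
  forall z, closure La z -> dotv (x - y) (z - y) <= 0.
Proof.
move=> Hsc x y Hy H z Hz.
have [->|zy] := eqVneq z y; first by rewrite subrr dotv0r.
have h : 0 < (2:R)^-1 < 1.
  apply/andP; split; first by rewrite invr_gt0 ltr0n.
  rewrite invf_lt1 ?ltr0n //; by rewrite ltr1n.
have := H _ (Hsc z y Hz Hy zy _ h).
have -> : 2^-1 *: z + (1 - 2^-1) *: y - y = 2^-1 *: (z - y).
  by apply/rowP => i; rewrite !mxE; ring.
rewrite dotvZr pmulr_rle0 // invr_gt0 ltr0n //.
Qed.

Lemma lip_alg (q u v : E) : dotv (q - u + v) v <= 0 -> 0 <= dotv q v ->
  dotv v v <= dotv u u.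
Proof.
rewrite dotvDl dotvBl => h1 h2.
have h3 := dotv_ge0 (u - v).
rewrite dotvBl !dotvBr (dotvC v u) in h3.
lra.
Qed.

Lemma proj_lip (C : set E) x y w p : C y -> C p ->
  (forall z, C z -> dotv (x - y) (z - y) <= 0) ->
  (forall z, C z -> dotv (w - p) (z - p) <= 0) ->
  dotv (p - y) (p - y) <= dotv (w - x) (w - x).
Proof.
move=> Cy Cp H1 H2.
apply: (@lip_alg (w - p)).
  have -> : w - p - (w - x) + (p - y) = x - y.
    by apply/rowP => i; rewrite !mxE; ring.
  exact: H1.
have := H2 y Cy.
have -> : y - p = - (p - y) by rewrite opprB.
rewrite dotvNr; lra.
Qed.

Lemma proj_bdry (La : set E) w p : closure La p ->
  (forall z, closure La z -> dotv (w - p) (z - p) <= 0) ->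
  ~ closure La w -> bdry La p.
Proof.
move=> Hp HVI Hw; split => // /nbhs_ballN [e [e0 He]].
set c := `|w - p|.
have c0 : 0 <= c by exact: normr_ge0.
have ce0 : 0 < 2 * (c + 1) by lra.
set s := e / (2 * (c + 1)).
have s0 : 0 < s by apply: divr_gt0.
have sce : s * (2 * (c + 1)) = e by rewrite /s mulfVK // gt_eqF.
have Hz : La (p + s *: (w - p)).
  apply: He; rewrite opprD addrA subrr add0r normrN normrZ ger0_norm ?ltW //.
  rewrite -/c; nra.
have := HVI _ (subset_closure Hz).
have -> : p + s *: (w - p) - p = s *: (w - p).
  by apply/rowP => i; rewrite !mxE; ring.
rewrite dotvZr pmulr_rle0 // => H.
have H0 : dotv (w - p) (w - p) = 0 by apply/le_anti; rewrite H dotv_ge0.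
have := @dotv_eq0 _ H0; move/eqP; rewrite subr_eq0 => /eqP wp.
by apply: Hw; rewrite wp.
Qed.

Lemma rho_le0 (La : set E) (rho : E -> R) (G y : E) :
  La = [set x | rho x < 0] -> has_grad rho y G -> closure La y -> rho y <= 0.
Proof.
move=> HLa Hg Hc; rewrite leNgt; apply/negP => r0.
have [d [d0 Hd]] := Hg 1 ltr01.
set k : R := n%:R.
have k0 : 0 <= k by rewrite ler0n.
set D1 := k + 1; set D2 := k * (`|G| + 1) + 1.
have D10 : 0 < D1 by rewrite /D1; lra.
have D20 : 0 < D2.
  have : 0 <= k * (`|G| + 1) by rewrite mulr_ge0 // addr_ge0.
  rewrite /D2; lra.
have eta0 : 0 < Num.min (d / D1) (rho y / D2).
  by rewrite lt_min !divr_gt0.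
have [z [Lz Hz]] := @closure_ballN La y _ Hc eta0.
move: Hz; rewrite lt_min => /andP [].
rewrite !ltr_pdivlMr // distrC => h1 h2.
have hG : 0 <= `|G| by [].
have hz : 0 <= `|z - y| by [].
have Hen : enorm (z - y) < d.
  apply: le_lt_trans (enorm_le_norm _) _.
  apply: le_lt_trans h1; rewrite /D1 mulrDr mulr1 ler_wpDr //.
  by rewrite mulrC.
have := Hd _ Hen; rewrite (addrC y) subrK mul1r.
have := abs_dotv_le G (z - y); rewrite -/k.
have := enorm_le_norm (z - y); rewrite -/k.
have : rho z < 0 by rewrite HLa in Lz.
move=> hr he hdot habs.
have := ler_norml (rho z - rho y - dotv G (z - y)) (enorm (z - y)).
rewrite habs => /esym /andP [h3 h4].
have := ler_norml (dotv G (z - y)) (k * (`|G| * `|z - y|)).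
rewrite hdot => /esym /andP [h5 h6].
move: h2; rewrite /D2 => h2.
clear -r0 h3 h5 h2 he hr hG hz k0. lra.
Qed.

Lemma normal_cone (La : set E) (rho : E -> R) (G y u : E) :
  La = [set x | rho x < 0] -> has_grad rho y G -> rho y <= 0 ->
  (forall z, La z -> dotv u (z - y) <= 0) ->
  forall w, dotv G w < 0 -> dotv u w <= 0.
Proof.
move=> HLa Hg ry Hu w gw.
set W := enorm w.
have W0 : 0 <= W := enorm_ge0 w.
have W10 : 0 < 2 * (W + 1) by lra.
set eps := - dotv G w / (2 * (W + 1)).
have eps0 : 0 < eps by rewrite divr_gt0 // oppr_gt0.
have epsW : eps * (2 * (W + 1)) = - dotv G w by rewrite /eps mulfVK // gt_eqF.
have [d [d0 Hd]] := Hg eps eps0.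
set s := d / (2 * (W + 1)).
have s0 : 0 < s by rewrite divr_gt0.
have sW : s * (2 * (W + 1)) = d by rewrite /s mulfVK // gt_eqF.
have Hen : enorm (s *: w) < d.
  rewrite enormZ (ger0_norm (ltW s0)) -/W; nra.
have := Hd _ Hen; rewrite enormZ (ger0_norm (ltW s0)) -/W dotvZr.
move=> /ler_normlP [_ h].
have Lz : La (y + s *: w).
  rewrite HLa /=.
  have : s * (dotv G w + eps * W) < 0 by nra.
  lra.
have := Hu _ Lz.
rewrite (addrC y) addrK dotvZr pmulr_rle0 //.
Qed.

Lemma le0_of_forall (a b : R) : (forall d, 0 < d -> a <= d * b) -> a <= 0.
Proof.
move=> H; rewrite leNgt; apply/negP => a0.
have [b0|b0] := leP b 0.
  by have := H 1 ltr01; lra.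
have hd : 0 < a / (2 * b) by rewrite divr_gt0 // mulr_gt0.
have := H _ hd.
have -> : a / (2 * b) * b = a / 2.
  by field; rewrite gt_eqF.
lra.
Qed.

Lemma dotv_gt0 u : u != 0 -> 0 < dotv u u.
Proof.
move=> u0; rewrite lt_def dotv_ge0 andbT; apply/eqP => h.
by move/eqP: u0; apply; apply: dotv_eq0.
Qed.

Lemma cone_ray (G u : E) : G != 0 ->
  (forall w, dotv G w < 0 -> dotv u w <= 0) ->
  u = (dotv u G / dotv G G) *: G /\ 0 <= dotv u G.
Proof.
move=> G0 Hu.
set gg := dotv G G.
have gg0 : 0 < gg := @dotv_gt0 G G0.
have Hlin : forall w, dotv u w <= (dotv G w / gg) * dotv u G.
  move=> w.
  suff : dotv u w - dotv G w / gg * dotv u G <= 0 by lra.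
  apply: (@le0_of_forall _ (dotv u G)) => d d0.
  have := Hu (w - (dotv G w / gg) *: G - d *: G).
  rewrite !dotvBr !dotvZr -/gg mulfVK ?gt_eqF //.
  have : 0 < d * gg by rewrite mulr_gt0.
  move=> h1 h2.
  have := h2 ltac:(lra); lra.
have Heq : forall w, dotv u w = (dotv G w / gg) * dotv u G.
  move=> w; apply/le_anti; rewrite Hlin /=.
  have := Hlin (- w); rewrite !dotvNr; lra.
have Hpos : 0 <= dotv u G.
  have := Hu (- G); rewrite !dotvNr -/gg.
  have h : - gg < 0 by rewrite oppr_lt0.
  move=> /(_ h); lra.
split => //.
set c := dotv u G / gg.
suff : u - c *: G = 0 by move/eqP; rewrite subr_eq0 => /eqP.
apply: dotv_eq0.
rewrite dotvBl !dotvBr !dotvZl !dotvZr (Heq u) (dotvC G u) -/gg /c.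
field; rewrite gt_eqF //.
Qed.
End Aux.
Unset Implicit Arguments.
Theorem lemma4p3 (R : realType) (n : nat)
  (leb : {measure set 'rV[R]_n -> \bar R}) (Hleb : is_lebesgue leb)
  (f g : 'rV[R]_n -> R)
  (* f, g nonnegative, in L^1, compactly supported *)
  (Hf_meas : measurable_fun setT f) (Hg_meas : measurable_fun setT g)
  (Hf_ge0 : forall x, 0 <= f x) (Hg_ge0 : forall x, 0 <= g x)
  (Hf_int : leb.-integrable setT (fun x => (f x)%:E))
  (Hg_int : leb.-integrable setT (fun x => (g x)%:E))
  (Hf_supp : exists K : set 'rV[R]_n, compact K /\ forall x, ~ K x -> f x = 0)
  (Hg_supp : exists K : set 'rV[R]_n, compact K /\ forall x, ~ K x -> g x = 0)
  (* standing assumptions on Omega = {f>0}, Lambda = {g>0} *)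
  (HOm_open : open (pos_set f)) (HOm_bdd : ebounded (pos_set f))
  (HOm_sc : strictly_convex_set (pos_set f))
  (HLa_open : open (pos_set g)) (HLa_bdd : ebounded (pos_set g))
  (HLa_sc : strictly_convex_set (pos_set g))
  (Hf_bds : exists c C : R, 0 < c /\ forall x, pos_set f x -> c <= f x <= C)
  (Hg_bds : exists c C : R, 0 < c /\ forall x, pos_set g x -> c <= g x <= C)
  (* additional assumptions of the lemma *)
  (HOm_dom : is_domain (pos_set f))
  (HLa_dom : is_domain (pos_set g)) (HLa_uc : uniformly_convex_set (pos_set g))
  (HLa_C11 : C11_boundary (pos_set g))
  (* the mass m *)
  (m : R)
  (Hm1 : (\int[leb]_x (`|Num.min (f x) (g x)|)%:E <= m%:E)%E)
  (Hm2 : (m%:E <= \int[leb]_x (`|f x|)%:E)%E)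
  (Hm3 : (m%:E <= \int[leb]_x (`|g x|)%:E)%E)
  (* the optimal plan gamma_m and its Brenier-type representation *)
  (gam : {measure set ('rV[R]_n * 'rV[R]_n)%type -> \bar R})
  (Psi : 'rV[R]_n -> \bar R) (fm gm : 'rV[R]_n -> R)
  (Hadm : admissible leb f g m gam)
  (Hopt : forall gam' : {measure set ('rV[R]_n * 'rV[R]_n)%type -> \bar R},
            admissible leb f g m gam' -> (cost gam <= cost gam')%E)
  (Huniq : forall gam' : {measure set ('rV[R]_n * 'rV[R]_n)%type -> \bar R},
            admissible leb f g m gam' -> (cost gam' <= cost gam)%E ->
            forall C, measurable C -> gam' C = gam C)
  (HPsi : econvex Psi)
  (Hfm_meas : measurable_fun setT fm) (Hgm_meas : measurable_fun setT gm)
  (Hfm : forall x, 0 <= fm x <= f x) (Hgm : forall y, 0 <= gm y <= g y)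
  (Hdiff_fm : leb.-negligible [set x | 0 < fm x /\ ~ edifferentiable Psi x])
  (Hdiff_gm : leb.-negligible [set y | 0 < gm y /\ ~ edifferentiable (legendre Psi) y])
  (Hgam1 : forall C, measurable C ->
     gam C = (\int[leb]_(x in [set x | edifferentiable Psi x /\ C (x, egrad Psi x)])
                (fm x)%:E)%E)
  (Hgam2 : forall C, measurable C ->
     gam C = (\int[leb]_(y in [set y | edifferentiable (legendre Psi) y /\
                                    C (egrad (legendre Psi) y, y)]) (gm y)%:E)%E)
  (Hpush : forall B : set 'rV[R]_n, measurable B ->
     (\int[leb]_(x in [set x | edifferentiable Psi x /\ B (egrad Psi x)]) (fm x)%:E)%E =
     (\int[leb]_(y in B) (gm y)%:E)%E)
  (* the extension tilde Psi_m *)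
  (Psit : 'rV[R]_n -> R)
  (HPsit_conv : rconvex Psit)
  (HPsit_diff : forall x, exists p, has_grad Psit x p)
  (HPsit_C1 : continuous (rgrad Psit))
  (HPsit_eq : forall x,
     (U_set (pos_set f) (pos_set g) (Gamma_set leb Psi fm gm) `&` pos_set f) x ->
     (Psit x)%:E = Psi x)
  (HPsit_id : forall x,
     (pos_set g `\` closure (V_set (pos_set f) (pos_set g) (Gamma_set leb Psi fm gm))) x ->
     rgrad Psit x = x)
  (HPsit_range : range (rgrad Psit) = closure (pos_set g))
  (HPsit_homeo :
     let D := closure (U_set (pos_set f) (pos_set g) (Gamma_set leb Psi fm gm) `&` pos_set f) in
     let D' := closure (V_set (pos_set f) (pos_set g) (Gamma_set leb Psi fm gm) `&` pos_set g) in
     set_bij D D' (rgrad Psit) /\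
     {within D', continuous (inv_on (rgrad Psit) D)})
  :
  let Om := pos_set f in
  let La := pos_set g in
  let U := U_set Om La (Gamma_set leb Psi fm gm) in
  let V := V_set Om La (Gamma_set leb Psi fm gm) in
  let T := rgrad Psit in
  let Tinv := inv_on T (closure (U `&` Om)) in
  let S1 := T @^-1` bd_nt La V Tinv `&` K_set (Om `&` U) T in
  let A2 := S1 `\` bdry U in
  T @` A2 `<=`
    relbdry (bdry La) (proj_on La @` Om `&` bdry La)
    `\` relbdry (bdry La) (bdry (Om `&` La) `&` bdry La).
Proof.
move=> Om La U V T Tinv S1 A2 y0 [x [[HT HK] HbU] <-].
set y := T x.
have [HbdOU [Txx Hray]] := HK.
have [HbdLa [_ HTinv]] := HT.
have [HbijD _] := HPsit_homeo.
have HclOU : closure (Om `&` U) x by case: HbdOU.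
have HTinvx : Tinv y = x.
  rewrite /Tinv /inv_on; apply: xget_unique.
    by split => //; rewrite setIC.
  move=> x' [Hx' Tx'].
  apply: (set_bij_inj HbijD); rewrite ?inE //.
  by rewrite setIC.
have HVIx : forall z, La z -> dotv (x - y) (z - y) <= 0.
  by move=> z Hz; rewrite -{1}HTinvx; apply: HTinv.
have HclOm : closure Om x by apply: (closureS (@subIsetl _ Om U)).
have HnbU : nbhs x U.
  case: (pselect (nbhs x U)) => // h; exfalso; apply: HbU; split => //.
  exact: (closureS (@subIsetr _ Om U)).
have [e [e0 He]] := nbhs_ballN (nbhs_interior HnbU).
have HOmx : ~ Om x.
  move=> Omx; apply: HbdOU.2; apply: filterI => //.
  exact: open_nbhs_nbhs.
have yx : y != x by [].
have xy0 : x - y != 0 by rewrite subr_eq0 eq_sym.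
have en0 : enorm (x - y) != 0.
  by apply/eqP => /enorm_eq0 /eqP; apply/negP.
have KL : forall q (lam : R), closure Om q -> q != x -> 0 <= lam ->
    q - y = lam *: (x - y) -> False.
  move=> q lam Hq qx lam0 Hqy.
  set c := `|x - q|.
  have c0 : 0 <= c by exact: normr_ge0.
  have ec0 : 0 < 2 * (e + c) by lra.
  set t := e / (2 * (e + c)).
  have t0 : 0 < t by rewrite divr_gt0.
  have tec : t * (2 * (e + c)) = e by rewrite /t mulfVK // gt_eqF.
  have t1 : t < 1 by nra.
  set p := t *: q + (1 - t) *: x.
  have Omp : Om p := HOm_sc q x Hq HclOm qx t (introT andP (conj t0 t1)).
  have Up : nbhs p U.
    apply: He.
    have -> : x - p = t *: (x - q) by apply/rowP => i; rewrite !mxE; ring.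
    rewrite normrZ (ger0_norm (ltW t0)) -/c; nra.
  have HnbOU : nbhs p (closure (Om `&` U)).
    apply: (filterS (@subset_closure _ _)); apply: filterI => //.
    exact: open_nbhs_nbhs.
  have Hrp : ray_L T x p.
    exists ((t * lam + 1 - t) * enorm (x - y)).
      rewrite /= mulr_ge0 ?enorm_ge0 //; nra.
    rewrite -/y scalerA mulfK //.
    have Hq' : q = y + lam *: (x - y) by rewrite -Hqy addrC subrK.
    rewrite /p Hq'; apply/rowP => i; rewrite !mxE; ring.
  have := Hray p (conj Hrp (subset_closure (conj Omp (nbhs_singleton Up)))).
  by move=> [_ ]; apply.
have Hy_nOm : ~ closure Om y.
  move=> Hy; apply: (KL y 0 Hy yx (lexx 0)).
  by rewrite subrr scale0r.
split.
- have La_ne : La !=set0 by case: HLa_dom => _ [].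
  have HclLa_y : closure La y by case: HbdLa.
  split => //; split.
  +
    move=> B /nbhs_ballN [e1 [e10 HB]].
    have HxnC : ~ closure La x.
      move=> Hx.
      have := VI_closure HLa_sc x HclLa_y HVIx Hx.
      move=> h.
      have h0 : dotv (x - y) (x - y) = 0 by apply/le_anti; rewrite h dotv_ge0.
      by move: xy0; rewrite (dotv_eq0 h0) eqxx.
    have /nbhs_ballN [e2 [e20 He2]] : nbhs x (~` closure La).
      by apply: open_nbhs_nbhs; split => //; apply: closed_openC; exact: closed_closure.
    set k : R := n%:R.
    have k0 : 0 <= k by rewrite ler0n.
    have d0 : 0 < Num.min e2 (e1 / (k + 1)).
      by rewrite lt_min e20 divr_gt0 //; lra.
    have [w [Omw Hw]] := closure_ballN _ HclOm d0.
    move: Hw; rewrite lt_min => /andP [Hw2 Hw1].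
    rewrite ltr_pdivlMr in Hw1; last by lra.
    have [Hp Hmin] := proj_spec La_ne HLa_bdd w.
    set p := proj_on La w in Hp Hmin *.
    have HVIp := proj_VI HLa_sc w Hp Hmin.
    have Hbp : bdry La p := proj_bdry Hp HVIp (He2 _ Hw2).
    exists p; split.
      by split => //; exists w.
    apply: HB.
    have := @proj_lip _ _ (closure La) x y w p HclLa_y Hp (VI_closure HLa_sc x HclLa_y HVIx) HVIp.
    have := dotv_le_norm _ (w - x); rewrite -/k.
    have := norm_sqr_le _ (p - y).
    rewrite (distrC w x) (distrC y p).
    have := normr_ge0 (x - w); have := normr_ge0 (p - y).
    move=> h1 h2 h3 h4 h5.
    clear -h1 h2 h3 h4 h5 Hw1 k0 e10.
    move: h1 h2 h3 h4 h5 Hw1.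
    move: (`|p - y|) (`|x - w|) (dotv (p - y) (p - y)) (dotv (w - x) (w - x)).
    move=> A B D1 D2 h1 h2 h3 h4 h5 h6.
    have hA : A ^+ 2 <= k * B ^+ 2 by lra.
    have hB : k * B ^+ 2 <= (B * (k + 1)) ^+ 2.
      rewrite exprMn; have : 0 <= B ^+ 2 by rewrite sqr_ge0.
      move=> hb; have : k <= (k + 1) ^+ 2 by nra.
      move=> hk; nra.
    have hC : (B * (k + 1)) ^+ 2 < e1 ^+ 2.
      have : 0 <= B * (k + 1) by rewrite mulr_ge0 //; lra.
      move=> hh; nra.
    nra.
  +
    move=> [[[w Omw Hpw] _] _].
    have [Hp Hmin] := proj_spec La_ne HLa_bdd w.
    rewrite Hpw in Hp Hmin.
    have HVIw := proj_VI HLa_sc w Hp Hmin.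
    have [rho [G [HG [_ [HLa_eq HGnz]]]]] := HLa_C11.
    have Gy0 : G y != 0 := HGnz y HbdLa.
    have ry : rho y <= 0 := rho_le0 HLa_eq (HG y) HclLa_y.
    have Hcx := normal_cone (x - y) HLa_eq (HG y) ry HVIx.
    have Hcw := normal_cone (w - y) HLa_eq (HG y) ry
      (fun z Hz => HVIw z (subset_closure Hz)).
    have [Hux Hux0] := @cone_ray _ _ (G y) (x - y) Gy0 Hcx.
    have [Huw Huw0] := @cone_ray _ _ (G y) (w - y) Gy0 Hcw.
    set gg := dotv (G y) (G y) in Hux Huw.
    have gg0 : 0 < gg := @dotv_gt0 _ _ (G y) Gy0.
    set c := dotv (x - y) (G y) / gg in Hux.
    set c' := dotv (w - y) (G y) / gg in Huw.
    have c0 : 0 <= c by rewrite /c divr_ge0 // ltW.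
    have c'0 : 0 <= c' by rewrite /c' divr_ge0 // ltW.
    have cn0 : c != 0.
      apply/eqP => hc; move: xy0; rewrite Hux hc scale0r eqxx //.
    have wx : w != x by apply/eqP => h; apply: HOmx; rewrite -h.
    apply: (KL w (c' / c) (subset_closure Omw) wx).
      by rewrite divr_ge0.
    by rewrite Huw Hux scalerA mulfVK.
- move=> [_ [Hcl _]].
  apply: Hy_nOm.
  rewrite ((closure_id (closure Om)).1 (@closed_closure _ Om)).
  apply: (closureS _ Hcl) => z [[Hz _] _].
  exact: (closureS (@subIsetl _ Om La)).
Qed.
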